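(* The vectors $\{\Lambda_1,\dots,\Lambda_d\}$ form a basis for the space $\Psi^{-1}(\mathcal{D}\cap (I_{\mathcal{C}})_2)$.
   Context: Let $P_d$ be a convex polygon with $d\ge 4$ vertices $v_1,\dots,v_d$ (indices mod $d$) over a field $\mathbb{K}$ with no three edge lines concurrent. Set ${\bf v}_i=(v_i,1)$, ${\bf n}_i={\bf v}_i\times{\bf v}_{i+1}$, $\alpha_j=|{\bf v}_{j-1}\,{\bf v}_j\,{\bf v}_{j+1}|$. In $S=\mathbb{K}[x_1,\ldots,x_d]$ let $\tau=\sum_i x_i{\bf v}_i$, $I_{\mathcal{C}}=\langle\tau_1,\tau_2,\tau_3\rangle$, $\mathcal{D}\subseteq S_2$ the span of diagonal monomials $x_ix_j$ ($j\notin\{i-1,i,i+1\}$), $\Psi:S_1^3\to(I_{\mathcal{C}})_2$ the map $F\mapsto F\cdot\tau$ (scalar product), and $\Lambda_k=\frac{x_{k+1}}{\alpha_{k+1}}{\bf n}_{k+1}-\frac{x_k}{\alpha_k}{\bf n}_{k-1}\in S_1^3$. *)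

(* Defs.v *)
From mathcomp Require Import all_boot all_order all_algebra.
From mathcomp Require Import mpoly.
Set Implicit Arguments. Unset Strict Implicit. Unset Printing Implicit Defensive.
Import Order.TTheory GRing.Theory Num.Theory.
Local Open Scope ring_scope.

(* Vertices are indexed by 'I_d (paper: 1..d), indices taken mod d. *)
Definition isucc d (i : 'I_d) : 'I_d := ordS i.
Definition ipred d (i : 'I_d) : 'I_d := ord_pred i.

Section Poly.
Variable K : realFieldType.

Definition hvec (p : K * K) : 'rV[K]_3 :=
  \row_(c < 3) (if c == 0 :> nat then p.1 else if c == 1 :> nat then p.2 else 1).

Definition cross (a b : 'rV[K]_3) : 'rV[K]_3 :=
  \row_(c < 3)
    (if c == 0 :> nat then a 0 1%:R * b 0 2%:R - a 0 2%:R * b 0 1%:R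
     else if c == 1 :> nat then a 0 2%:R * b 0 0 - a 0 0 * b 0 2%:R
     else a 0 0 * b 0 1%:R - a 0 1%:R * b 0 0).

Definition det3 (a b c : 'rV[K]_3) : K :=
  \det (\matrix_(i < 3, j < 3)
          (if i == 0 :> nat then a 0 j else if i == 1 :> nat then b 0 j else c 0 j)).

Variable d : nat.
Variable v : 'I_d -> K * K.

Definition vb (i : 'I_d) : 'rV[K]_3 := hvec (v i).
Definition nvec (i : 'I_d) : 'rV[K]_3 := cross (vb i) (vb (isucc i)).
Definition alpha (j : 'I_d) : K := det3 (vb (ipred j)) (vb j) (vb (isucc j)).

(* strictly convex polygon with vertices v_1..v_d listed in cyclic order:
   for every edge, all other vertices lie strictly on one and the same side
   (the side being the same for all edges, i.e. a fixed orientation) *)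
Definition convex_polygon : Prop :=
  exists s : K, (s = 1 \/ s = -1) /\
    forall i j : 'I_d, j != i -> j != isucc i ->
      0 < s * det3 (vb i) (vb (isucc i)) (vb j).

(* no three edge lines concurrent (projectively: |n_i n_j n_k| <> 0) *)
Definition no_three_concurrent : Prop :=
  forall i j k : 'I_d, i != j -> j != k -> i != k ->
    det3 (nvec i) (nvec j) (nvec k) != 0.

Notation S := {mpoly K[d]}.

Definition tau (c : 'I_3) : S := \sum_(i < d) (vb i 0 c) *: 'X_i.

Definition Psi (F : 'I_3 -> S) : S := \sum_(c < 3) F c * tau c.

Definition linear_form (p : S) : Prop :=
  exists a : 'I_d -> K, p = \sum_(i < d) a i *: 'X_i.

Definition in_S1_3 (F : 'I_3 -> S) : Prop := forall c, linear_form (F c).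

Definition quadratic_form (p : S) : Prop :=
  exists b : 'I_d -> 'I_d -> K,
    p = \sum_(i < d) \sum_(j < d) b i j *: ('X_i * 'X_j).

Definition in_IC (p : S) : Prop :=
  exists g : 'I_3 -> S, p = \sum_(c < 3) g c * tau c.
Definition in_IC2 (p : S) : Prop := quadratic_form p /\ in_IC p.

Definition diagonal_pair (i j : 'I_d) : bool :=
  [&& j != ipred i, j != i & j != isucc i].

Definition in_D (p : S) : Prop :=
  exists b : 'I_d -> 'I_d -> K,
    p = \sum_(i < d) \sum_(j < d | diagonal_pair i j) b i j *: ('X_i * 'X_j).

(* the space Psi^{-1}(D cap (I_C)_2) inside S_1^3 *)
Definition in_V (F : 'I_3 -> S) : Prop :=
  in_S1_3 F /\ in_D (Psi F) /\ in_IC2 (Psi F).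

Definition Lambda (k : 'I_d) (c : 'I_3) : S :=
  (nvec (isucc k) 0 c / alpha (isucc k)) *: 'X_(isucc k)
  - (nvec (ipred k) 0 c / alpha k) *: 'X_k.

Definition lincomb (a : 'I_d -> K) (c : 'I_3) : S :=
  \sum_(k < d) a k *: Lambda k c.

Definition Lambda_basis : Prop :=
  (forall k, in_V (Lambda k)) /\
  (forall a : 'I_d -> K, (forall c, lincomb a c = 0) -> forall k, a k = 0) /\
  (forall F, in_V F -> exists a : 'I_d -> K, forall c, F c = lincomb a c).

End Poly.

(* Main.v *)
Require Import Defs.
From mathcomp Require Import all_boot all_order all_algebra.
From mathcomp Require Import mpoly.
From mathcomp Require Import ring zify.
Import Order.TTheory GRing.Theory Num.Theory.
Set Implicit Arguments. Unset Strict Implicit. Unset Printing Implicit Defensive.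
Local Open Scope ring_scope.
Lemma modS_cases d i : (i < d)%N -> (i.+1 %% d = i.+1 /\ i.+1 < d \/ i.+1 %% d = 0 /\ i.+1 = d)%N.
Proof.
move=> hi; case: (ltnP i.+1 d) => h; first by left; rewrite modn_small.
right; have e: i.+1 = d by lia. by rewrite e modnn.
Qed.
Lemma succ_neq d (i : 'I_d) : (2 <= d)%N -> isucc i != i.
Proof.
move=> hd; apply/eqP=> /(congr1 val) /=. case: i => i hi /=.
case: (modS_cases hi) => -[-> ?]; lia.
Qed.
Lemma succ_neq_pred d (i : 'I_d) : (3 <= d)%N -> isucc i != ipred i.
Proof.
move=> hd; apply/eqP=> /(congr1 (@ordS d)). rewrite /ipred ord_predK.
move/(congr1 val) => /=. case: i => i hi /=.
case: (modS_cases hi) => -[-> h1].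
  case: (modS_cases h1) => -[-> ?]; lia.
rewrite modn_small; lia.
Qed.

Lemma diagE (K : realFieldType) d (C : 'I_d -> 'I_d -> K) : (3 <= d)%N ->
  (forall i, C i i = 0) -> (forall i, C i (isucc i) + C (isucc i) i = 0) ->
  \sum_i \sum_j C i j *: ('X_i * 'X_j : {mpoly K[d]})
  = \sum_i \sum_(j | diagonal_pair i j) C i j *: ('X_i * 'X_j).
Proof.
move=> hd h0 h1.
have split i : \sum_j C i j *: ('X_i * 'X_j : {mpoly K[d]}) =
   \sum_(j | diagonal_pair i j) C i j *: ('X_i * 'X_j)
   + (C i (isucc i) *: ('X_i * 'X_(isucc i)) + C i (ipred i) *: ('X_i * 'X_(ipred i))).
  rewrite (bigID (diagonal_pair i)) /=; congr (_ + _).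
  rewrite (bigD1 (isucc i)) /=; last by rewrite /diagonal_pair eqxx !andbF.
  rewrite (bigD1 (ipred i)) /=; last first.
    by rewrite /diagonal_pair eqxx /= eq_sym (succ_neq_pred i hd).
  rewrite big1 ?addr0 // => j /andP[/andP[hnd hs] hp].
  move: hnd; rewrite /diagonal_pair hs hp andbT negbK => /eqP ->.
  by rewrite h0 scale0r.
under eq_bigr do rewrite split.
rewrite big_split /= -[RHS]addr0; congr (_ + _).
rewrite big_split /=.
have -> : \sum_i C i (ipred i) *: ('X_i * 'X_(ipred i) : {mpoly K[d]}) =
   \sum_i C (isucc i) i *: ('X_i * 'X_(isucc i)).
  rewrite [LHS](reindex_inj (@ordS_inj d)); apply: eq_bigr => i _.
  by rewrite /ipred ordSK mulrC.
rewrite -big_split /= big1 // => i _.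
by rewrite -scalerDl h1 scale0r.
Qed.
Definition rvn (K : realFieldType) (a : 'rV[K]_3) (n : nat) := a 0 (inord n).
Lemma rv3E (K : realFieldType) (a : 'rV[K]_3) (j : 'I_3) : a 0 j = rvn a (val j).
Proof. by rewrite /rvn; congr (a 0 _); apply/val_inj; rewrite /= inordK. Qed.
Definition fn3 (K : realFieldType) (f : 'I_3 -> K) (n : nat) := f (inord n).
Lemma fn3E (K : realFieldType) (f : 'I_3 -> K) (j : 'I_3) : f j = fn3 f (val j).
Proof. by rewrite /fn3; congr (f _); apply/val_inj; rewrite /= inordK. Qed.
Lemma det3E (K : realFieldType) (a b c : 'rV[K]_3) : det3 a b c =
  rvn a 0 * (rvn b 1 * rvn c 2 - rvn b 2 * rvn c 1)
- rvn a 1 * (rvn b 0 * rvn c 2 - rvn b 2 * rvn c 0)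
+ rvn a 2 * (rvn b 0 * rvn c 1 - rvn b 1 * rvn c 0).
Proof.
rewrite /det3 (expand_det_row _ 0) !big_ord_recl big_ord0 /= /cofactor.
rewrite !(expand_det_row _ 0) !big_ord_recl !big_ord0 /= /cofactor.
rewrite !det_mx11 !mxE /= !rv3E /=.
ring.
Qed.
Lemma crossE (K : realFieldType) (a b : 'rV[K]_3) :
  (rvn (cross a b) 0 = rvn a 1 * rvn b 2 - rvn a 2 * rvn b 1) /\
  (rvn (cross a b) 1 = rvn a 2 * rvn b 0 - rvn a 0 * rvn b 2) /\
  (rvn (cross a b) 2 = rvn a 0 * rvn b 1 - rvn a 1 * rvn b 0).
Proof.
have h0 : (inord 0 : 'I_3) = 0 by apply/val_inj; rewrite /= inordK.
have h1 : (inord 1 : 'I_3) = 1 by apply/val_inj; rewrite /= inordK.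
have h2 : (inord 2 : 'I_3) = 2%:R by apply/val_inj; rewrite /= inordK.
by rewrite /rvn /cross !mxE !inordK //= h0 h1 h2.
Qed.
Definition dot (K : realFieldType) (a b : 'rV[K]_3) := \sum_(c < 3) a 0 c * b 0 c.
Lemma dotE (K : realFieldType) (a b : 'rV[K]_3) :
  dot a b = rvn a 0 * rvn b 0 + rvn a 1 * rvn b 1 + rvn a 2 * rvn b 2.
Proof. by rewrite /dot !big_ord_recl big_ord0 !rv3E /= addr0 addrA. Qed.
Lemma dot_cross (K : realFieldType) (a b z : 'rV[K]_3) : dot (cross a b) z = det3 a b z.
Proof.
rewrite dotE det3E; have [-> [-> ->]] := crossE a b; ring.
Qed.
Lemma det3C (K : realFieldType) (a b z : 'rV[K]_3) : det3 a b z = det3 b z a.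
Proof. rewrite !det3E; ring. Qed.
Lemma det3_aa (K : realFieldType) (a b : 'rV[K]_3) : det3 a b a = 0 /\ det3 a b b = 0.
Proof. rewrite !det3E; split; ring. Qed.
Lemma key_id (K : realFieldType) (u w z : 'rV[K]_3) (f : 'I_3 -> K) (c : 'I_3) :
  det3 u w z * f c = (\sum_k f k * u 0 k) * cross w z 0 c
     + (\sum_k f k * w 0 k) * cross z u 0 c + (\sum_k f k * z 0 k) * cross u w 0 c.
Proof.
rewrite !big_ord_recl !big_ord0 !rv3E (fn3E f c) !(fn3E f) /= det3E.

have [e1 [e2 e3]] := crossE w z; have [e4 [e5 e6]] := crossE z u;
have [e7 [e8 e9]] := crossE u w.
case: c => [[|[|[|c]]] hc] //=; rewrite ?e1 ?e2 ?e3 ?e4 ?e5 ?e6 ?e7 ?e8 ?e9; ring.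
Qed.
Lemma lin_eval (K : realFieldType) d (a : 'I_d -> K) (x : 'I_d -> K) :
  (\sum_i a i *: 'X_i : {mpoly K[d]}).@[x] = \sum_i a i * x i.
Proof.
rewrite (big_morph (meval x) (mevalD x) (meval0 x)).
by apply: eq_bigr => i _; rewrite mevalZ mevalXU.
Qed.

Lemma Psi_eval (K : realFieldType) d (v : 'I_d -> K * K) F x :
  (Psi v F).@[x] = \sum_c (F c).@[x] * (tau v c).@[x].
Proof.
rewrite /Psi (big_morph (meval x) (mevalD x) (meval0 x)).
by apply: eq_bigr => c _; rewrite mevalM.
Qed.

Definition beta (K : realFieldType) d (v : 'I_d -> K * K) (a : 'I_d -> K) i c :=
  (a (ipred i) * nvec v i 0 c - a i * nvec v (ipred i) 0 c) / alpha v i.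

Lemma lincombE (K : realFieldType) d (v : 'I_d -> K * K) a c :
  lincomb v a c = \sum_i beta v a i c *: 'X_i.
Proof.
rewrite /lincomb /Lambda.
under eq_bigr do rewrite scalerBr.
rewrite sumrB.
set G := fun i : 'I_d => (a (ipred i) * (nvec v i 0 c / alpha v i)) *: ('X_i : {mpoly K[d]}).
have -> : \sum_(k < d) a k *: ((nvec v (isucc k) 0 c / alpha v (isucc k)) *: 'X_(isucc k))
   = \sum_k G (isucc k).
  apply: eq_bigr => k _; rewrite /G scalerA /ipred /isucc ordSK //.
rewrite /isucc; have -> : \sum_k G (ordS k) = \sum_k G k by rewrite [RHS](reindex_inj (@ordS_inj d)).
rewrite -sumrB.
apply: eq_bigr => i _; rewrite /G scalerA -scalerBl /beta; congr (_ *: _).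
rewrite !mulrA mulrBl //.
Qed.

Lemma PsiE (K : realFieldType) d (v : 'I_d -> K * K) (a : 'I_3 -> 'I_d -> K) F :
  (forall c, F c = \sum_i a c i *: 'X_i) ->
  Psi v F = \sum_i \sum_j (\sum_c a c i * vb v j 0 c) *: ('X_i * 'X_j).
Proof.
move=> hF; rewrite /Psi /tau.
under eq_bigr do rewrite hF mulr_suml.
under eq_bigr do under eq_bigr do rewrite mulr_sumr.
rewrite exchange_big /=; apply: eq_bigr => i _.
rewrite exchange_big /=; apply: eq_bigr => j _.
rewrite scaler_suml; apply: eq_bigr => c _.
by rewrite -scalerAl -scalerAr scalerA.
Qed.

Lemma alpha_neq0 (K : realFieldType) d (v : 'I_d -> K * K) j :
  (3 <= d)%N -> convex_polygon v -> alpha v j != 0.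
Proof.
move=> hd [s [_ H]].
have := H (ipred j) (isucc j) (succ_neq_pred j hd).
rewrite /isucc /ipred ord_predK => /(_ (succ_neq j (leqW hd))).
by apply: contraTneq => h; rewrite /alpha /ipred /isucc in h; rewrite h mulr0 ltxx.
Qed.

Lemma sum_beta (K : realFieldType) d (v : 'I_d -> K * K) a i (w : 'rV[K]_3) :
  \sum_c beta v a i c * w 0 c =
  (a (ipred i) * det3 (vb v i) (vb v (isucc i)) w
   - a i * det3 (vb v (ipred i)) (vb v (isucc (ipred i))) w) / alpha v i.
Proof.
rewrite -!dot_cross /beta /nvec /dot !big_ord_recl !big_ord0.
rewrite !addr0; ring.
Qed.

Lemma spE d (i : 'I_d) : isucc (ipred i) = i. Proof. exact: ord_predK. Qed.
Lemma psE d (i : 'I_d) : ipred (isucc i) = i. Proof. exact: ordSK. Qed.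

Lemma beta_ii (K : realFieldType) d (v : 'I_d -> K * K) a i :
  \sum_c beta v a i c * vb v i 0 c = 0.
Proof.
rewrite sum_beta spE (det3_aa (vb v i) (vb v (isucc i))).1.
by rewrite (det3_aa (vb v (ipred i)) (vb v i)).2 !mulr0 subrr mul0r.
Qed.

Lemma beta_is (K : realFieldType) d (v : 'I_d -> K * K) a i :
  (3 <= d)%N -> convex_polygon v ->
  \sum_c beta v a i c * vb v (isucc i) 0 c = - a i.
Proof.
move=> hd hc; have ha := alpha_neq0 i hd hc.
rewrite sum_beta spE (det3_aa (vb v i) (vb v (isucc i))).2 mulr0 sub0r.
by rewrite mulNr mulfK.
Qed.

Lemma beta_si (K : realFieldType) d (v : 'I_d -> K * K) a i :
  (3 <= d)%N -> convex_polygon v ->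
  \sum_c beta v a (isucc i) c * vb v i 0 c = a i.
Proof.
move=> hd hc; have ha := alpha_neq0 (isucc i) hd hc.
rewrite sum_beta !psE (det3_aa (vb v i) (vb v (isucc i))).1.
rewrite mulr0 subr0 -det3C /alpha psE mulfK //; by move: ha; rewrite /alpha psE.
Qed.

Lemma ej_sum (K : realFieldType) d (f : 'I_d -> K) j :
  \sum_k f k * (k == j)%:R = f j.
Proof.
rewrite (bigD1 j) //= eqxx mulr1 big1 ?addr0 // => k /negbTE ->.
by rewrite mulr0.
Qed.

Lemma ej2_sum (K : realFieldType) d (f : 'I_d -> K) i j :
  \sum_k f k * ((k == i)%:R + (k == j)%:R) = f i + f j.
Proof. by rewrite -!ej_sum -big_split; apply: eq_bigr => k _; rewrite mulrDr. Qed.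

Lemma inV_beta (K : realFieldType) d (v : 'I_d -> K * K) a F :
  (3 <= d)%N -> convex_polygon v ->
  (forall c, F c = \sum_i beta v a i c *: 'X_i) -> in_V v F.
Proof.
move=> hd hc hF; split; first by move=> c; exists (fun i => beta v a i c).
have hP := @PsiE _ _ v (fun c i => beta v a i c) F hF.
split.
  exists (fun i j => \sum_c beta v a i c * vb v j 0 c).
  rewrite hP diagE //; first by move=> i; exact: beta_ii.
  by move=> i; rewrite beta_is // beta_si // addNr.
split; last by exists F.
by exists (fun i j => \sum_c beta v a i c * vb v j 0 c).
Qed.

Theorem lemma3p6 (K : realFieldType) (d : nat) (v : 'I_d -> K * K) :
  (4 <= d)%N ->
  convex_polygon v ->
  no_three_concurrent v ->
  Lambda_basis v.
Proof.
move=> hd4 hc _; have hd : (3 <= d)%N by apply: ltnW.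
split; [|split].
- move=> k; apply: (@inV_beta _ _ v (fun j => (j == k)%:R)) => // c.
  rewrite -lincombE /lincomb (bigD1 k) //= eqxx scale1r big1 ?addr0 // => j /negbTE ->.
  by rewrite scale0r.
- move=> a h k.
  have hb c : beta v a k c = 0.
    have := congr1 (meval (fun j => (j == k)%:R)) (h c).
    by rewrite lincombE lin_eval meval0 ej_sum.
  have : \sum_c beta v a k c * vb v (isucc k) 0 c = 0.
    by apply: big1 => c _; rewrite hb mul0r.
  by rewrite beta_is // => /eqP; rewrite oppr_eq0 => /eqP.
- move=> F [hS [hD _]].
  have [a ha] := fin_all_exists hS.
  pose C := fun i j => \sum_c a c i * vb v j 0 c.
  have hPe x : (Psi v F).@[x] = \sum_c (\sum_k a c k * x k) * (\sum_l vb v l 0 c * x l).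
    rewrite Psi_eval; apply: eq_bigr => c _; by rewrite ha lin_eval /tau lin_eval.
  have [b hb] := hD.
  have h0 x : (forall k l, diagonal_pair k l -> x k * x l = 0) -> (Psi v F).@[x] = 0.
    move=> hx; rewrite hb (big_morph (meval x) (mevalD x) (meval0 x)) big1 // => i _.
    rewrite (big_morph (meval x) (mevalD x) (meval0 x)) big1 // => j hj.
    by rewrite mevalZ mevalM !mevalXU hx ?mulr0.
  have hC0 i : C i i = 0.
    have := h0 (fun k => (k == i)%:R).
    rewrite hPe; under eq_bigr do rewrite !ej_sum; apply.
    move=> k l /and3P[_ hl _]; case: (eqVneq k i) => [hk|hk]; last by rewrite mul0r.
    by rewrite hk in hl; rewrite (negbTE hl) mulr0.
  have hC1 i : C i (isucc i) + C (isucc i) i = 0.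
    have := h0 (fun k => (k == i)%:R + (k == isucc i)%:R).
    rewrite hPe; under eq_bigr do rewrite !ej2_sum.
    have -> : \sum_c (a c i + a c (isucc i)) * (vb v i 0 c + vb v (isucc i) 0 c)
      = C i i + (C i (isucc i) + C (isucc i) i) + C (isucc i) (isucc i).
      by rewrite /C -!big_split; apply: eq_bigr => c _ /=; ring.
    rewrite !hC0 add0r addr0; apply.
    have xz k : k != i -> k != isucc i -> (k == i)%:R + (k == isucc i)%:R = 0 :> K.
      by move=> /negbTE -> /negbTE ->; rewrite addr0.
    move=> k l /and3P[h1 h2 h3] /=.
    case: (eqVneq k i) => [hk|hki].
      by rewrite hk in h2 h3; rewrite (xz l) ?mulr0.
    case: (eqVneq k (isucc i)) => [hk|hks]; last by rewrite !mulr0n addr0 mul0r.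
    by rewrite hk psE in h1; rewrite hk in h2; rewrite (xz l) ?mulr0.
  exists (fun k => - C k (isucc k)) => c.
  rewrite lincombE ha; apply: eq_bigr => i _; congr (_ *: _).
  rewrite /beta.
  have e1 : - C (ipred i) (isucc (ipred i)) = C i (ipred i).
    move/eqP: (hC1 (ipred i)); rewrite spE addr_eq0 => /eqP ->; by rewrite opprK.
  have hk : alpha v i * a c i = C i (ipred i) * nvec v i 0 c
     + C i i * cross (vb v (isucc i)) (vb v (ipred i)) 0 c
     + C i (isucc i) * nvec v (ipred i) 0 c.
    by rewrite /alpha /nvec spE; exact: key_id.
  rewrite hC0 mul0r addr0 in hk.
  have ha0 := alpha_neq0 i hd hc.
  by rewrite e1 mulNr opprK -hk [alpha v i * _]mulrC mulfK.
Qed.
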